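(* For every $n\ge1$ and every $A\subseteq[n]$, the set-alternating domain $D_X(A)$ is a copious peak-pit domain and is a maximal Condorcet domain on $[n]$.
   Context: Alternatives are $X=[n]$, with societal axis $1<\dots<n$; linear orders are written as strings, leftmost ranked highest. For $A\subseteq[n]$, $D_X(A)$ is the set of all linear orders $q$ on $[n]$ such that for every triple $i<j<k$: if $j\in A$ then $i$ is not ranked last among $\{i,j,k\}$ in $q$ ($1N3$), and if $j\notin A$ then $k$ is not ranked first among $\{i,j,k\}$ in $q$ ($3N1$). A domain is a set of linear orders on $[n]$. A Condorcet domain is a domain $D$ such that for every profile with an odd number of voters whose preferences all lie in $D$, the pairwise majority relation is transitive. It is maximal if no Condorcet domain on $[n]$ strictly contains it. A domain is copious if its restriction to every triple of alternatives contains exactly 4 distinct orders. For a triple $a<b<c$, call them the 1st, 2nd, 3rd alternative; the never condition $xNp$ ($x,p\in\{1,2,3\}$) says the $x$-th alternative of the triple is never in position $p$ within the triple. A domain is peak-pit if for every triple its restriction satisfies some never condition of the form $xN3$ or $xN1$. *)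

(* Defs.v *)
From mathcomp Require Import all_boot all_fingroup.
Set Implicit Arguments. Unset Strict Implicit. Unset Printing Implicit Defensive.

(* Alternatives X = [n] are represented by 'I_n (0-based; the societal axis
   is the natural order of 'I_n).  A linear order q on X is a permutation
   q : {perm 'I_n} giving the RANK of each alternative: q x = 0 means x is
   ranked highest; x is preferred to y in q iff q x < q y. *)
Definition lorder n := {perm 'I_n}.
Definition domain n := {set lorder n}.

(* position (0 = top, 2 = bottom) of t within the triple {a,b,c} in q *)
Definition pos3 n (q : lorder n) (a b c t : 'I_n) : nat :=
  #|[set y in [:: a; b; c] | q y < q t]|.

Definition DX n (A : {set 'I_n}) : domain n :=
  [set q : lorder n | [forall i : 'I_n, forall j : 'I_n, forall k : 'I_n,
     (i < j) && (j < k) ==>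
       (if j \in A then pos3 q i j k i != 2 else pos3 q i j k k != 0)]].

Definition majority n (P : seq (lorder n)) (a b : 'I_n) : bool :=
  count (fun q : lorder n => q b < q a) P < count (fun q : lorder n => q a < q b) P.

Definition condorcet n (D : domain n) : Prop :=
  forall P : seq (lorder n), odd (size P) -> all (fun q => q \in D) P ->
    forall a b c : 'I_n, majority P a b -> majority P b c -> majority P a c.

Definition maximal_condorcet n (D : domain n) : Prop :=
  condorcet D /\
  forall D' : domain n, condorcet D' -> D \subset D' -> D' = D.

Definition restr3 n (q : lorder n) (a b c : 'I_n) : {set 'I_n * 'I_n} :=
  [set xy | [&& xy.1 \in [:: a; b; c], xy.2 \in [:: a; b; c] & q xy.1 < q xy.2]].

Definition copious n (D : domain n) : Prop :=
  forall a b c : 'I_n, a < b -> b < c ->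
    #|[set restr3 q a b c | q in D]| = 4.

Definition nth3 n (a b c : 'I_n) (x : nat) : 'I_n :=
  if x == 1 then a else if x == 2 then b else c.

Definition never n (D : domain n) (a b c : 'I_n) (x p : nat) : Prop :=
  forall q, q \in D -> (pos3 q a b c (nth3 a b c x)).+1 != p.

Definition peak_pit n (D : domain n) : Prop :=
  forall a b c : 'I_n, a < b -> b < c ->
    exists x p, x \in [:: 1; 2; 3] /\ p \in [:: 1; 3] /\ never D a b c x p.

(* Main.v *)
Require Import Defs.
From mathcomp Require Import all_boot all_fingroup.
From mathcomp Require Import zify.
Set Implicit Arguments. Unset Strict Implicit. Unset Printing Implicit Defensive.

Section Gen.
Variable n : nat.

Lemma perm_of_rel (r : rel 'I_n) : irreflexive r -> transitive r ->
  (forall x y, x != y -> r x y || r y x) ->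
  exists q : lorder n, forall x y, (q x < q y) = r x y.
Proof.
move=> irr tr tot.
pose f x := #|[set y | r y x]|.
have mono x y : r x y -> f x < f y.
  move=> rxy; apply: proper_card; apply/properP; split.
    by apply/subsetP => z; rewrite !inE => rzx; apply: tr rxy.
  by exists x; rewrite !inE ?irr.
have fE x y : (f x < f y) = r x y.
  case rxy: (r x y); first by apply: mono.
  case: (eqVneq x y) => [->|nxy]; first by rewrite ltnn.
  have := tot _ _ nxy; rewrite rxy /= => /mono h.
  by apply/negbTE; rewrite -leqNgt ltnW.
have flt x : f x < n.
  rewrite -[n]card_ord -cardsT; apply: proper_card; rewrite properT.
  by apply/eqP => e; have := in_setT x; rewrite -e inE irr.
pose F x := Ordinal (flt x).
have Finj : injective F.
  move=> x y /(congr1 val) /= e; apply/eqP; apply/negP => /negP nxy.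
  by have := tot _ _ nxy; rewrite -!fE e ltnn.
by exists (perm Finj) => x y; rewrite !permE /= fE.
Qed.

Lemma ltq_sym (q : lorder n) x y : x != y -> (q y < q x) = ~~ (q x < q y).
Proof.
move=> nxy; rewrite ltnNge leq_eqVlt negb_or andbC.
have -> : (q x == q y :> nat) = false.
  apply/negbTE/negP => /eqP /val_inj /perm_inj e; by rewrite e eqxx in nxy.
by rewrite andbT.
Qed.

Lemma pos3E (q : lorder n) a b c t : uniq [:: a; b; c] ->
  pos3 q a b c t = (q a < q t) + (q b < q t) + (q c < q t).
Proof.
move=> u; rewrite /pos3.
have -> : [set y in [:: a; b; c] | q y < q t] =
          [set y in filter (fun y => q y < q t) [:: a; b; c]].
  by apply/setP => y; rewrite !inE mem_filter !inE andbC.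
rewrite (@eq_card _ _ (mem (filter (fun y => q y < q t) [:: a; b; c]))); last by move=> y; rewrite inE.
rewrite (card_uniqP _) ?filter_uniq // size_filter /=.
by rewrite addn0 addnA.
Qed.

Lemma neq_lt (x y : 'I_n) : x < y -> x != y.
Proof. by move=> h; apply/eqP => e; rewrite e ltnn in h. Qed.

Lemma uniq3 (i j k : 'I_n) : i < j -> j < k -> uniq [:: i; j; k].
Proof.
move=> h1 h2 /=; rewrite !inE negb_or !neq_lt //; exact: ltn_trans h2.
Qed.

Definition cond3 (A : {set 'I_n}) (q : lorder n) (i j k : 'I_n) : bool :=
  if j \in A then ~~ ((q j < q i) && (q k < q i))
  else ~~ ((q k < q i) && (q k < q j)).

Lemma cond3E A q (i j k : 'I_n) : i < j -> j < k ->
  cond3 A q i j k = (if j \in A then pos3 q i j k i != 2 else pos3 q i j k k != 0).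
Proof.
move=> h1 h2; have u := uniq3 h1 h2; rewrite /cond3 !pos3E // !ltnn.
have hik : i < k by exact: ltn_trans h2.
rewrite (ltq_sym q (neq_lt hik)) (ltq_sym q (neq_lt h2)).
by case: (j \in A); do 2 case: (_ < _).
Qed.

Lemma DX_cond A q (i j k : 'I_n) : q \in DX A -> i < j -> j < k -> cond3 A q i j k.
Proof.
rewrite inE => /forallP /(_ i) /forallP /(_ j) /forallP /(_ k) /implyP h h1 h2.
by rewrite cond3E // h // h1.
Qed.

Lemma memDX A q : (forall i j k : 'I_n, i < j -> j < k -> cond3 A q i j k) ->
  q \in DX A.
Proof.
move=> h; rewrite inE; apply/forallP => i; apply/forallP => j; apply/forallP => k.
apply/implyP => /andP [h1 h2]; by rewrite -cond3E // h.
Qed.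

End Gen.

Definition region (i j k x : nat) : nat :=
  if x < i then 0 else if x == i then 1 else if x < j then 2 else if x == j then 3
  else if x < k then 4 else if x == k then 5 else 6.

Lemma region_mono i j k x y : i < j -> j < k -> x < y ->
  (region i j k x <= region i j k y) &&
  ((region i j k x == region i j k y) ==> ~~ odd (region i j k x)).
Proof. move=> h1 h2 h3; rewrite /region. repeat (case: ifP => ? //=); lia. Qed.

Lemma region_lt7 i j k x : region i j k x \in iota 0 7.
Proof. rewrite mem_iota /region; repeat case: ifP => //. Qed.

Lemma region3 i j k x : i < j -> region i j k x = 3 -> x = j.
Proof. move=> h; rewrite /region. repeat (case: ifP => ? //=); lia. Qed.

Definition checkg (g : nat -> bool -> nat) (jA : bool) : bool :=
  all (fun ra => all (fun rb => all (fun rc =>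
  all (fun ma => all (fun mb => all (fun mc =>
    [&& ra <= rb, rb <= rc, (ra == rb) ==> ~~ odd ra, (rb == rc) ==> ~~ odd rb,
        (ra == 3) ==> (ma == jA), (rb == 3) ==> (mb == jA) & (rc == 3) ==> (mc == jA)]
    ==> (if mb then ~~ ((g rb mb < g ra ma) && (g rc mc < g ra ma))
         else ~~ ((g rc mc < g ra ma) && (g rc mc < g rb mb))))
  [:: true; false]) [:: true; false]) [:: true; false]) (iota 0 7)) (iota 0 7)) (iota 0 7).

Definition g_id (r : nat) (m : bool) : nat := 0.
Definition g_ikj (r : nat) (m : bool) : nat :=
  match r with 0 | 1 | 2 => 0 | 3 => 3 | 4 => if m then 4 else 1 | 5 => 2 | _ => 5 end.
Definition g_jik (r : nat) (m : bool) : nat :=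
  match r with 0 => 0 | 1 => 3 | 2 => if m then 4 else 1 | 3 => 2 | _ => 5 end.
Definition g_3 (r : nat) (m : bool) : nat :=
  match r with 0 => 0 | 1 => 3 | 2 | 3 | 4 => if m then 4 else 1 | 5 => 2 | _ => 5 end.

Lemma checks b : [&& checkg g_id b, checkg g_ikj b, checkg g_jik b & checkg g_3 b].
Proof. by case: b; vm_compute. Qed.

Section Wit.
Variables (n : nat) (A : {set 'I_n}) (i j k : 'I_n).
Hypotheses (hij : i < j) (hjk : j < k).

Definition wr (g : nat -> bool -> nat) : rel 'I_n := fun x y =>
  (g (region i j k x) (x \in A) < g (region i j k y) (y \in A)) ||
  ((g (region i j k x) (x \in A) == g (region i j k y) (y \in A)) && (x < y)).

Lemma wr_gt g (x y : 'I_n) : x < y ->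
  wr g y x = (g (region i j k y) (y \in A) < g (region i j k x) (x \in A)).
Proof.
move=> h; rewrite /wr; have -> : (y < x) = false by apply/negbTE; rewrite -leqNgt ltnW.
by rewrite andbF orbF.
Qed.

Lemma witness g : checkg g (j \in A) ->
  exists w : lorder n, w \in DX A /\ forall x y, (w x < w y) = wr g x y.
Proof.
move=> hc.
have [w wE] : exists w : lorder n, forall x y, (w x < w y) = wr g x y.
  apply: perm_of_rel.
  - by move=> x; rewrite /wr !ltnn andbF.
  - move=> y x z; rewrite /wr.
    move=> /orP [h1|/andP [/eqP e1 h1]] /orP [h2|/andP [/eqP e2 h2]]; apply/orP.
    + by left; lia.
    + by left; lia.
    + by left; lia.
    + by right; apply/andP; split; [apply/eqP|]; lia.
  - move=> x y nxy; rewrite /wr.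
    have : (x : nat) != y by apply: contra nxy => /eqP /val_inj ->.
    move=> nxy'.
    set gx := g _ (x \in A); set gy := g _ (y \in A).
    case: (ltngtP gx gy) => h //=; rewrite ?orbT //.
    by case: (ltngtP x y) nxy' => // ->; rewrite eqxx.
exists w; split=> //.
apply: memDX => a b c hab hbc; rewrite /cond3.
have hac : a < c by exact: ltn_trans hbc.
rewrite !wE !wr_gt //.
have := region_mono hij hjk hab; have := region_mono hij hjk hbc.
move=> /andP [m1 m2] /andP [m3 m4].
have r3 (x : 'I_n) : (region i j k x == 3) ==> ((x \in A) == (j \in A)).
  apply/implyP => /eqP /(region3 hij) e.
  by have -> : x = j by apply: val_inj.
move: hc => /allP /(_ _ (region_lt7 i j k a)) /allP /(_ _ (region_lt7 i j k b))
  /allP /(_ _ (region_lt7 i j k c)).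
have mtf (bb : bool) : bb \in [:: true; false] by case: bb.
move=> /allP /(_ _ (mtf (a \in A))) /allP /(_ _ (mtf (b \in A))) /allP /(_ _ (mtf (c \in A))).
by move=> /implyP; apply; rewrite m1 m2 m3 m4 !r3.
Qed.

End Wit.

Definition pat n (q : lorder n) (i j k : 'I_n) : bool * bool * bool :=
  (q i < q j, q i < q k, q j < q k).

Definition allowed (b : bool) : seq (bool * bool * bool) :=
  if b then [:: (true, true, true); (true, true, false); (false, true, true); (true, false, false)]
  else [:: (true, true, true); (true, true, false); (false, true, true); (false, false, true)].

Section Trip.
Variables (n : nat) (A : {set 'I_n}) (i j k : 'I_n).
Hypotheses (hij : i < j) (hjk : j < k).

Let hik : i < k. Proof. exact: ltn_trans hjk. Qed.
Let nij : (i == j) = false. Proof. exact: negbTE (neq_lt hij). Qed.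
Let njk : (j == k) = false. Proof. exact: negbTE (neq_lt hjk). Qed.
Let nik : (i == k) = false. Proof. exact: negbTE (neq_lt hik). Qed.
Let nji : (j == i) = false. Proof. by rewrite eq_sym nij. Qed.
Let nkj : (k == j) = false. Proof. by rewrite eq_sym njk. Qed.
Let nki : (k == i) = false. Proof. by rewrite eq_sym nik. Qed.

Lemma regi : region i j k i = 1.
Proof. by rewrite /region ltnn eqxx. Qed.
Lemma regj : region i j k j = 3.
Proof.
rewrite /region ltnNge (ltnW hij) /= ltnn eqxx.
by have -> : (j == i :> nat) = false by [].
Qed.
Lemma regk : region i j k k = 5.
Proof.
rewrite /region ltnNge (ltnW hik) /= ltnNge (ltnW hjk) /= ltnn eqxx.
have -> : (k == i :> nat) = false by [].
by have -> : (k == j :> nat) = false by [].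
Qed.

Lemma pat_witness p : p \in allowed (j \in A) -> exists2 w, w \in DX A & pat w i j k = p.
Proof.
have W g : checkg g (j \in A) ->
    exists2 w, w \in DX A & pat w i j k = (wr A i j k g i j, wr A i j k g i k, wr A i j k g j k).
  move=> /(witness hij hjk) [w [wD wE]]; exists w => //.
  by rewrite /pat !wE.
move: (checks (j \in A)) => /and4P [/W [w1 D1 P1] /W [w2 D2 P2] /W [w3 D3 P3] /W [w4 D4 P4]].
rewrite /wr regi regj regk hij hjk hik /= in P1 P2 P3 P4.
case jA: (j \in A) P1 P2 P3 P4 => P1 P2 P3 P4;
  (move: P4; rewrite /= => P4; rewrite /allowed !inE => /or4P [] /eqP ->; [by exists w1|by exists w2|by exists w3|by exists w4]).
Qed.

Lemma pat_allowed q : q \in DX A -> pat q i j k \in allowed (j \in A).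
Proof.
move=> qD; have := DX_cond qD hij hjk; rewrite /cond3 /pat /allowed.
rewrite (ltq_sym q (neq_lt hij)) (ltq_sym q (neq_lt hik)) (ltq_sym q (neq_lt hjk)).
have : ((q i < q j) && (q j < q k)) ==> (q i < q k) by apply/implyP => /andP [h1 h2]; lia.
have : (~~ (q i < q j) && ~~ (q j < q k)) ==> ~~ (q i < q k).
  by apply/implyP => /andP [h1 h2]; lia.
by case: (j \in A); case: (q i < q j); case: (q i < q k); case: (q j < q k).
Qed.

Definition relp (p : bool * bool * bool) (x y : 'I_n) : bool :=
  if x == i then (if y == j then p.1.1 else if y == k then p.1.2 else false)
  else if x == j then (if y == i then ~~ p.1.1 else if y == k then p.2 else false)
  else if y == i then ~~ p.1.2 else if y == j then ~~ p.2 else false.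

Definition Rf (p : bool * bool * bool) : {set 'I_n * 'I_n} :=
  [set xy | [&& xy.1 \in [:: i; j; k], xy.2 \in [:: i; j; k] & relp p xy.1 xy.2]].

Lemma restr3E q : restr3 q i j k = Rf (pat q i j k).
Proof.
apply/setP => [[x y]]; rewrite !inE /=.
case hx: [|| x == i, x == j | x == k]; case hy: [|| y == i, y == j | y == k] => //=.
move: hx hy => /or3P [] /eqP -> /or3P [] /eqP ->;
  rewrite /relp /pat /= ?eqxx ?nij ?njk ?nik ?nji ?nkj ?nki ?ltnn //=.
- by rewrite (ltq_sym q (neq_lt hij)).
- by rewrite (ltq_sym q (neq_lt hik)).
- by rewrite (ltq_sym q (neq_lt hjk)).
Qed.

Lemma Rf_inj : injective Rf.
Proof.
move=> [[a b] c] [[a' b'] c'] e.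
have h x y : (x, y) \in Rf (a, b, c) = ((x, y) \in Rf (a', b', c')) by rewrite e.
move: (h i j) (h i k) (h j k); rewrite !inE /relp /= !eqxx nij njk nik nji nkj nki /=.
by move=> -> -> ->.
Qed.

Lemma card_allowed b : #|[set p | p \in allowed b]| = 4.
Proof.
rewrite (@eq_card _ _ (mem (allowed b))); last by move=> p; rewrite inE.
by rewrite (card_uniqP _) //; case: b.
Qed.

Lemma copious_trip : #|[set restr3 q i j k | q in DX A]| = 4.
Proof.
have -> : [set restr3 q i j k | q in DX A] = Rf @: [set pat q i j k | q in DX A].
  rewrite -imset_comp; apply: eq_imset => q /=; exact: restr3E.
rewrite card_imset; last exact: Rf_inj.
rewrite -(card_allowed (j \in A)); apply: eq_card => p.
rewrite [in RHS]inE; apply/imsetP/idP.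
  by move=> [q qD ->]; apply: pat_allowed.
by move=> /pat_witness [w wD <-]; exists w.
Qed.

End Trip.

Lemma half2 s c1 c2 : s < 2 * c1 -> s < 2 * c2 -> s < c1 + c2.
Proof. lia. Qed.
Lemma neq_cases (x y : nat) : x != y -> x < y \/ y < x.
Proof. lia. Qed.

Section Cond.
Variables (n : nat) (A : {set 'I_n}).

Lemma cnt_compl (P : seq (lorder n)) (x y : 'I_n) : x != y ->
  count (fun q : lorder n => q y < q x) P + count (fun q : lorder n => q x < q y) P = size P.
Proof.
move=> nxy; rewrite -(count_predC (fun q : lorder n => q x < q y) P) addnC.
congr (_ + _); apply: eq_count => q /=; by rewrite ltq_sym.
Qed.

Lemma inter (P : seq (lorder n)) (p1 p2 : pred (lorder n)) :
  size P < count p1 P + count p2 P -> exists2 q, q \in P & p1 q && p2 q.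
Proof.
move=> h; have : has (predI p1 p2) P.
  rewrite has_count.
  have := count_predUI p1 p2 P; have := count_size (predU p1 p2) P; lia.
by move/hasP.
Qed.

Lemma maj_big (P : seq (lorder n)) (x y : 'I_n) : x != y -> majority P x y ->
  size P < 2 * count (fun q : lorder n => q x < q y) P.
Proof. move=> nxy; rewrite /majority => h; have := cnt_compl P nxy; lia. Qed.

Lemma sen_sorted (P : seq (lorder n)) (i j k : 'I_n) : i < j -> j < k ->
  all (fun q => q \in DX A) P ->
  forall v1, v1 \in P -> v1 j < v1 i -> v1 k < v1 i ->
  forall v2, v2 \in P -> v2 k < v2 i -> v2 k < v2 j -> False.
Proof.
move=> hij hjk /allP hall v1 i1 a1 b1 v2 i2 a2 b2.
have := DX_cond (hall _ i1) hij hjk; have := DX_cond (hall _ i2) hij hjk.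
rewrite /cond3; case: (j \in A); by rewrite ?a1 ?b1 ?a2 ?b2.
Qed.

Lemma DX_condorcet : condorcet (DX A).
Proof.
move=> P hodd hall a b c hab hbc.
have nab : a != b by apply/eqP => e; move: hab; rewrite e /majority ltnn.
have nbc : b != c by apply/eqP => e; move: hbc; rewrite e /majority ltnn.
have nac : a != c by apply/eqP => e; move: hab hbc; rewrite e /majority; lia.
apply/negPn/negP => hac.
have hca : majority P c a.
  move: hac; rewrite /majority -leqNgt leq_eqVlt => /orP [/eqP e|//].
  have := cnt_compl P nac; rewrite e addnn => es.
  by move: hodd; rewrite -es odd_double.
have := maj_big nab hab; have := maj_big nbc hbc.
have nca : c != a by rewrite eq_sym.
have := maj_big nca hca => h3 h2 h1.
have [v1 i1 /andP [x1 y1]] :=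
  @inter P (fun q : lorder n => q a < q b) (fun q : lorder n => q b < q c) (half2 h1 h2).
have [v2 i2 /andP [x2 y2]] :=
  @inter P (fun q : lorder n => q b < q c) (fun q : lorder n => q c < q a) (half2 h2 h3).
have [v3 i3 /andP [x3 y3]] :=
  @inter P (fun q : lorder n => q c < q a) (fun q : lorder n => q a < q b) (half2 h3 h1).
clear h1 h2 h3 hab hbc hac hca hodd.
have nab' : (a : nat) != b := nab.
have nbc' : (b : nat) != c := nbc.
have nac' : (a : nat) != c := nac.
have [ab|ba] := neq_cases nab'.
- have [bc|cb] := neq_cases nbc'.
  + exact: (sen_sorted ab bc hall i2 (ltn_trans x2 y2) y2 i3 x3 (ltn_trans x3 y3)).
  + have [ac|ca] := neq_cases nac'.
    * exact: (sen_sorted ac cb hall i2 y2 (ltn_trans x2 y2) i2 (ltn_trans x2 y2) x2).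
    * exact: (sen_sorted ca ab hall i1 (ltn_trans x1 y1) y1 i2 x2 (ltn_trans x2 y2)).
- have [bc|cb] := neq_cases nbc'.
  + have [ac|ca] := neq_cases nac'.
    * exact: (sen_sorted ba ac hall i3 y3 (ltn_trans x3 y3) i3 (ltn_trans x3 y3) x3).
    * exact: (sen_sorted bc ca hall i3 (ltn_trans x3 y3) y3 i1 x1 (ltn_trans x1 y1)).
  + exact: (sen_sorted cb ba hall i1 y1 (ltn_trans x1 y1) i1 (ltn_trans x1 y1) x1).
Qed.

End Cond.

Lemma cyc3 n (D : domain n) (P : seq (lorder n)) (x y z : 'I_n) : condorcet D ->
  odd (size P) -> all (fun q => q \in D) P ->
  majority P x y -> majority P y z -> majority P z x -> False.
Proof.
move=> hD ho ha hxy hyz; have := hD P ho ha x y z hxy hyz.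
rewrite /majority; lia.
Qed.

Section Max.
Variables (n : nat) (A : {set 'I_n}) (i j k : 'I_n).
Hypotheses (hij : i < j) (hjk : j < k).

Let hik : i < k. Proof. exact: ltn_trans hjk. Qed.

Lemma patE (q : lorder n) : pat q i j k = (~~ (q j < q i), ~~ (q k < q i), q j < q k).
Proof.
by rewrite /pat (ltq_sym q (neq_lt hij)) (ltq_sym q (neq_lt hik)) !negbK.
Qed.

Lemma pat6 (q : lorder n) p1 p2 p3 : pat q i j k = (p1, p2, p3) ->
  (q i < q j) = p1 /\ (q j < q i) = ~~ p1 /\ (q i < q k) = p2 /\ (q k < q i) = ~~ p2 /\
      (q j < q k) = p3 /\ (q k < q j) = ~~ p3.
Proof.
rewrite /pat => [[<- <- <-]].
by rewrite (ltq_sym q (neq_lt hij)) (ltq_sym q (neq_lt hik)) (ltq_sym q (neq_lt hjk)).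
Qed.

Lemma peak_pit_trip : exists x p, x \in [:: 1; 2; 3] /\ p \in [:: 1; 3] /\ never (DX A) i j k x p.
Proof.
case jA: (j \in A).
  exists 1, 3; split; first by []; split; first by [].
  move=> q qD; have := DX_cond qD hij hjk; rewrite cond3E // jA /nth3 /=.
  by rewrite eqSS.
exists 3, 1; split; first by []; split; first by [].
move=> q qD; have := DX_cond qD hij hjk; rewrite cond3E // jA /nth3 /=.
by rewrite eqSS.
Qed.

Lemma max_trip (D' : domain n) (q : lorder n) : condorcet D' -> DX A \subset D' ->
  q \in D' -> cond3 A q i j k.
Proof.
move=> hD sub qD.
have W p : p \in allowed (j \in A) -> exists2 w, w \in D' & pat w i j k = p.
  by move=> /(pat_witness hij hjk) [w wD wp]; exists w => //; apply: (subsetP sub).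
rewrite /cond3; case jA: (j \in A); apply/negP => /andP [h1 h2].
- case hjk': (q j < q k).
  + have Pq : pat q i j k = (false, false, true) by rewrite patE h1 h2 hjk'.
    have [w1 D1 P1] := W (true, false, false) ltac:(by rewrite jA).
    have [w2 D2 P2] := W (true, true, true) ltac:(by rewrite jA).
    case: (pat6 Pq) => [a0 [b0 [c0 [d0 [e0 f0]]]]]; case: (pat6 P1) => [a1 [b1 [c1 [d1 [e1 f1]]]]];
    case: (pat6 P2) => [a2 [b2 [c2 [d2 [e2 f2]]]]].
    apply: (@cyc3 _ D' [:: q; w1; w2] j k i hD) => //=; rewrite ?qD ?D1 ?D2 //;
      rewrite /majority /= ?a0 ?b0 ?c0 ?d0 ?e0 ?f0 ?a1 ?b1 ?c1 ?d1 ?e1 ?f1 ?a2 ?b2 ?c2 ?d2 ?e2 ?f2 //.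
  + have Pq : pat q i j k = (false, false, false) by rewrite patE h1 h2 hjk'.
    have [w1 D1 P1] := W (false, true, true) ltac:(by rewrite jA).
    have [w2 D2 P2] := W (true, true, false) ltac:(by rewrite jA).
    case: (pat6 Pq) => [a0 [b0 [c0 [d0 [e0 f0]]]]]; case: (pat6 P1) => [a1 [b1 [c1 [d1 [e1 f1]]]]];
    case: (pat6 P2) => [a2 [b2 [c2 [d2 [e2 f2]]]]].
    apply: (@cyc3 _ D' [:: q; w1; w2] k j i hD) => //=; rewrite ?qD ?D1 ?D2 //;
      rewrite /majority /= ?a0 ?b0 ?c0 ?d0 ?e0 ?f0 ?a1 ?b1 ?c1 ?d1 ?e1 ?f1 ?a2 ?b2 ?c2 ?d2 ?e2 ?f2 //.
- have hkj : (q j < q k) = false.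
    by apply/negbTE; rewrite -(ltq_sym q (neq_lt hjk)).
  case hij': (q j < q i).
  + have Pq : pat q i j k = (false, false, false) by rewrite patE h1 hij' hkj.
    have [w1 D1 P1] := W (false, true, true) ltac:(by rewrite jA).
    have [w2 D2 P2] := W (true, true, false) ltac:(by rewrite jA).
    case: (pat6 Pq) => [a0 [b0 [c0 [d0 [e0 f0]]]]]; case: (pat6 P1) => [a1 [b1 [c1 [d1 [e1 f1]]]]];
    case: (pat6 P2) => [a2 [b2 [c2 [d2 [e2 f2]]]]].
    apply: (@cyc3 _ D' [:: q; w1; w2] k j i hD) => //=; rewrite ?qD ?D1 ?D2 //;
      rewrite /majority /= ?a0 ?b0 ?c0 ?d0 ?e0 ?f0 ?a1 ?b1 ?c1 ?d1 ?e1 ?f1 ?a2 ?b2 ?c2 ?d2 ?e2 ?f2 //.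
  + have Pq : pat q i j k = (true, false, false) by rewrite patE h1 hij' hkj.
    have [w1 D1 P1] := W (true, true, true) ltac:(by rewrite jA).
    have [w2 D2 P2] := W (false, false, true) ltac:(by rewrite jA).
    case: (pat6 Pq) => [a0 [b0 [c0 [d0 [e0 f0]]]]]; case: (pat6 P1) => [a1 [b1 [c1 [d1 [e1 f1]]]]];
    case: (pat6 P2) => [a2 [b2 [c2 [d2 [e2 f2]]]]].
    apply: (@cyc3 _ D' [:: q; w1; w2] k i j hD) => //=; rewrite ?qD ?D1 ?D2 //;
      rewrite /majority /= ?a0 ?b0 ?c0 ?d0 ?e0 ?f0 ?a1 ?b1 ?c1 ?d1 ?e1 ?f1 ?a2 ?b2 ?c2 ?d2 ?e2 ?f2 //.
Qed.

End Max.

Theorem proposition1 (n : nat) (A : {set 'I_n}) : 1 <= n ->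
  copious (DX A) /\ peak_pit (DX A) /\ maximal_condorcet (DX A).
Proof.
move=> _; split; first by move=> a b c hab hbc; apply: copious_trip.
split; first by move=> a b c hab hbc; apply: peak_pit_trip.
split; first exact: DX_condorcet.
move=> D' hD sub; apply/eqP; rewrite eqEsubset sub andbT.
apply/subsetP => q qD; apply: memDX => a b c hab hbc.
exact: (max_trip hab hbc hD sub qD).
Qed.
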